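(* Consider the rendezvous game on a connected graph $G$ against Divider with exactly one agent $D_1$. Suppose that at some moment when it is Facilitator's turn to move, $R$ and $J$ occupy vertices of a cycle $C$ of $G$ that has a shortcut. Then Facilitator has a strategy such that after at most $\ell(C)$ of his moves, $R$ and $J$ occupy vertices of a cycle $C'$ of $G$ with $\ell(C')<\ell(C)$.
   Context: Rendezvous game with adversaries. Let $G$ be a finite, simple, undirected, connected graph, let $s,t\in V(G)$ and let $k\ge 1$ be an integer. Two players play: Facilitator, who controls two agents $R$ and $J$ initially placed on $s$ and $t$ respectively, and Divider, who controls $k$ agents $D_1,\dots,D_k$ which Divider initially places on vertices of $V(G)\setminus\{s,t\}$ of his choice (several agents may share a vertex). After the initial placement the players alternate moves, Facilitator moving first. In a move, the player moves each of his agents to an adjacent vertex or leaves it where it is; no agent may be moved to a vertex currently occupied by an agent of the opponent. Both players have full information. Facilitator wins if at some moment $R$ and $J$ occupy the same vertex; Divider wins if this never happens. $\ell(P)$, $\ell(C)$ denote the number of edges of a path $P$ or cycle $C$. For a cycle $C$ of $G$ and distinct $u,v\in V(C)$, let $P_1,P_2$ be the two internally vertex-disjoint $(u,v)$-paths contained in $C$. $C$ has a $(u,v)$-shortcut if there is a $(u,v)$-path $P$ in $G-(V(C)\setminus\{u,v\})$ with $\ell(P)<\ell(P_1)$ and $\ell(P)<\ell(P_2)$; $C$ has a shortcut if it has a $(u,v)$-shortcut for some distinct $u,v\in V(C)$. *)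

(* Defs.v *)
From mathcomp Require Import all_boot.
Set Implicit Arguments. Unset Strict Implicit. Unset Printing Implicit Defensive.

Definition simple_graph (T : finType) (e : rel T) : Prop :=
  symmetric e /\ irreflexive e.

Definition connected_graph (T : finType) (e : rel T) : Prop :=
  forall x y : T, connect e x y.

(* A cycle of G is given by the cyclic sequence of its (distinct) vertices,
   at least 3 of them, consecutive ones (cyclically) adjacent.
   Its length l(C) is the number of edges = size c. *)
Definition is_cycle (T : finType) (e : rel T) (c : seq T) : Prop :=
  [/\ 3 <= size c, uniq c & cycle e c].

(* (u,v)-path P in G - (V(C) \ {u,v}): P = u :: p, simple, ending at v,
   whose vertices other than u and v avoid V(C).  l(P) = size p. *)
Definition avoiding_path (T : finType) (e : rel T) (c : seq T) (u v : T)
    (p : seq T) : Prop :=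
  [/\ path e u p, last u p = v, uniq (u :: p)
    & forall x, x \in p -> x != v -> x \notin c].

(* For distinct u, v on the cycle c, the two (u,v)-paths contained in the
   cycle have lengths size (arc c u v) and size (arc c v u). *)
Definition has_shortcut_at (T : finType) (e : rel T) (c : seq T) (u v : T)
    : Prop :=
  [/\ u \in c, v \in c, u != v &
    exists p, avoiding_path e c u v p /\
      size p < size (arc c u v) /\ size p < size (arc c v u)].

Definition has_shortcut (T : finType) (e : rel T) (c : seq T) : Prop :=
  exists u v, has_shortcut_at e c u v.

Definition fac_move (T : finType) (e : rel T) (d r j r' j' : T) : bool :=
  [&& (r' == r) || e r r', (j' == j) || e j j', r' != d & j' != d].

Definition div_move (T : finType) (e : rel T) (r j d d' : T) : bool :=
  [&& (d' == d) || e d d', d' != r & d' != j].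

(* fac_forces e n goal r j d : in position (R=r, J=j, D=d) with Facilitator
   to move, Facilitator has a strategy guaranteeing that [goal R J] holds
   now or after at most n of his moves, whatever Divider does (game tree
   formulation of a finite-horizon strategy; Facilitator's choices may
   depend on the whole history). *)
Fixpoint fac_forces (T : finType) (e : rel T) (n : nat)
    (goal : T -> T -> Prop) (r j d : T) : Prop :=
  goal r j \/
  match n with
  | 0 => False
  | n'.+1 => exists r' j', fac_move e d r j r' j' /\
      forall d', div_move e r' j' d d' -> fac_forces e n' goal r' j' d'
  end.

(* Main.v *)
Require Import Defs.
From mathcomp Require Import all_boot.
From mathcomp Require Import zify.
From Stdlib Require Import Lia.
Set Implicit Arguments. Unset Strict Implicit. Unset Printing Implicit Defensive.

Section S.
Variables (T : finType) (e : rel T).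

Lemma short_cycle (c : seq T) x y X Y p :
  uniq (x :: X ++ y :: Y) -> cycle e (x :: X ++ y :: Y) ->
  c =i (x :: X ++ y :: Y) -> avoiding_path e c x y p ->
  size p < (size X).+1 -> size p < (size Y).+1 ->
  [/\ is_cycle e (y :: Y ++ belast x p),
      size (y :: Y ++ belast x p) < size (x :: X ++ y :: Y) &
      forall w, w \in y :: x :: Y -> w \in y :: Y ++ belast x p].
Proof.
move=> Hu Hc Hm [Hp Hl Hup Hav] H1 H2.
have Hxy : x != y.
  by move: Hu => /= /andP[+ _]; apply: contra => /eqP->; rewrite mem_cat inE eqxx orbT.
case: p Hp Hl Hup Hav H1 H2 => [|z q] Hp Hl Hup Hav H1 H2.
  by move: Hxy; rewrite -Hl /= eqxx.
set q' := belast z q.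
have Hzq : z :: q = rcons q' y by rewrite -Hl /q' -lastI.
have Hup' : uniq (rcons (x :: q') y) by rewrite rcons_cons -Hzq.
rewrite rcons_uniq in Hup'; case/andP: Hup' => Hyq Huq'.
rewrite /= -/q'.
split.
- split.
  + rewrite /= size_cat /= size_belast; move: H2 => /=; lia.
  + rewrite -cat_cons cat_uniq. apply/and3P; split.
    * by move: Hu; rewrite /= cat_uniq => /andP[_ /and3P[_ _ H]]; exact: H.
    * apply/hasPn => w; rewrite inE => /orP[/eqP->|Hw].
        move: Hu => /= /andP[+ _]; by rewrite mem_cat negb_or => /andP[].
      have Hwp : w \in z :: q by rewrite Hzq mem_rcons inE Hw orbT.
      have Hwy : w != y by apply: contraNneq Hyq => <-; rewrite inE Hw orbT.
      have := Hav w Hwp Hwy; rewrite Hm; apply: contra => Hw'.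
      by rewrite inE mem_cat Hw' !orbT.
    * exact: Huq'.
  + have Hc' : path e y Y && e (last y Y) x.
      by move: Hc; rewrite /= rcons_cat cat_path /= rcons_path => /andP[_ /andP[_ ->]].
    rewrite /= rcons_cat rcons_cons -Hzq cat_path.
    by case/andP: Hc' => -> /= ->.
- rewrite /= !size_cat /= size_belast; move: H1 => /=; lia.
- move=> w; rewrite !inE mem_cat inE => /or3P[->|->|->]; by rewrite ?orbT.
Qed.

Lemma rev_avoid (c : seq T) x y p : symmetric e ->
  avoiding_path e c x y p -> avoiding_path e c y x (rev (belast x p)).
Proof.
move=> Hs [Hp Hl Hup Hav].
have Hup' : uniq (rcons (belast x p) y) by rewrite -Hl -lastI.
split.
- by rewrite -Hl rev_path (@eq_path _ _ e _ x p) // => a b /=; rewrite Hs.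
- case: p Hl {Hp Hup Hav Hup'} => [/= <- //|z q _] /=; by rewrite rev_cons last_rcons.
- by rewrite -rev_rcons rev_uniq.
- move=> w; rewrite mem_rev => Hw Hwx.
  have : w \in x :: p by apply: mem_belast.
  rewrite inE (negbTE Hwx) /= => Hwp; apply: Hav => //.
  move: Hup'; rewrite rcons_uniq => /andP[+ _]; by apply: contraNneq => <-.
Qed.
End S.

Section G.
Variables (T : finType) (e : rel T) (u v : T) (A B : seq T).
Let s := u :: A ++ v :: B.
Hypothesis Hu : uniq s.
Hypothesis Hc : cycle e s.

Definition gg (x : T) := if x \in A then size A - index x A
  else if x \in B then size B - index x B else 0.

Definition cond (r j : T) := (r == j) || ((r \in u :: v :: A) && (j \in u :: v :: A))
   || ((r \in v :: u :: B) && (j \in v :: u :: B)).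

Lemma uniq_facts : [/\ u \notin A, u \notin B, u != v, v \notin A & v \notin B] /\
  [/\ uniq A, uniq B & forall x, x \in A -> x \notin B].
Proof.
move: Hu; rewrite /s /= mem_cat !inE negb_or cat_uniq /= => /andP[/andP[uA /norP[uv uB]]].
rewrite negb_or => /and4P[UA /andP[vA /hasPn HAB] vB UB].
split; first by split.
split=> // x xA; apply/negP => xB; by move: (HAB x xB); rewrite xA.
Qed.

Lemma gg_next x : (x \in A) || (x \in B) -> 0 < gg x /\ gg (next s x) < gg x.
Proof.
have [[uA uB uv vA vB] [UA UB AB]] := uniq_facts.
have xs : forall y, (y \in A) || (y \in B) -> y \in s.
  by move=> y /orP[H|H]; rewrite /s inE mem_cat inE H ?orbT.
move=> Hx; have Hxs := xs x Hx.
rewrite next_nth Hxs /s.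
have xu : (u == x) = false by apply/negbTE; case/orP: Hx; apply: contraL => /eqP <-.
rewrite /= xu index_cat nth_cat.
case/orP: Hx => xA.
- have Hi := xA; rewrite -index_mem in Hi.
  rewrite xA /gg xA.
  case: (ltnP (index x A).+1 (size A)) => Hi2.
  + have yA : nth u A (index x A).+1 \in A by apply: mem_nth.
    rewrite yA index_uniq //; split; rewrite ?subnS ?ltn_predL subn_gt0 //.
  + have -> : (index x A).+1 - size A = 0 by apply/eqP; rewrite subn_eq0.
    rewrite [nth _ _ 0]/= (negbTE vA) (negbTE vB); split; rewrite subn_gt0 //.
- have xnA : x \notin A by apply/negP => H; move: (AB x H); rewrite xA.
  have vx : (v == x) = false by apply/negbTE; apply: contraL xA => /eqP <-.
  have -> : index x (v :: B) = (index x B).+1 by rewrite /= vx.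
  rewrite (negbTE xnA).
  have -> : ((size A + (index x B).+1).+1 < size A) = false by rewrite ltnNge -addnS leq_addr.
  have -> : (size A + (index x B).+1).+1 - size A = (index x B).+2 by rewrite -!addnS addKn.
  have -> : nth u (v :: B) (index x B).+2 = nth u B (index x B).+1 by [].
  rewrite /gg (negbTE xnA) xA.
  have Hi := xA; rewrite -index_mem in Hi.
  case: (ltnP (index x B).+1 (size B)) => Hi2.
  + have yB : nth u B (index x B).+1 \in B by apply: mem_nth.
    have yA : nth u B (index x B).+1 \notin A by apply/negP => H; move: (AB _ H); rewrite yB.
    rewrite (negbTE yA) yB index_uniq //; split; rewrite ?subnS ?ltn_predL subn_gt0 //.
  + rewrite nth_default // (negbTE uA) (negbTE uB); split; rewrite subn_gt0 //.
Qed.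
Lemma side r j : r \in s -> j \in s -> ~~ cond r j ->
  [/\ (r \in A) || (r \in B), (j \in A) || (j \in B) & r != j].
Proof.
rewrite /cond /s !inE !mem_cat !inE.
move: (r == u) (r == v) (r \in A) (r \in B) (j == u) (j == v) (j \in A) (j \in B) (r == j).
by do 9!case.
Qed.

Lemma arith1 a b : 0 < a -> 0 < b -> a + b <= 1 -> False.
Proof. lia. Qed.
Lemma arith2 a a' b b' n : a' < a -> b' <= b -> a + b <= n.+2 -> a' + b' <= n.+1.
Proof. lia. Qed.

Lemma side2 r j : r \in s -> j \in s -> ~~ cond r j ->
  ((r \in A) && (j \in B)) || ((r \in B) && (j \in A)).
Proof.
rewrite /cond /s !inE !mem_cat !inE.
move: (r == u) (r == v) (r \in A) (r \in B) (j == u) (j == v) (j \in A) (j \in B) (r == j).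
by do 9!case.
Qed.

Lemma gg_bound r j : r \in s -> j \in s -> ~~ cond r j -> gg r + gg j <= size s.
Proof.
move=> Hr Hj Hcd.
have [[uA uB uv vA vB] [UA UB AB]] := uniq_facts.
have sz : size s = (size A + size B).+2 by rewrite /s /= size_cat /= addnS.
rewrite sz.
have bA : forall x, x \in A -> gg x <= size A by move=> x xA; rewrite /gg xA leq_subr.
have bB : forall x, x \in B -> gg x <= size B.
  move=> x xB; have xnA : x \notin A by apply/negP => H; move: (AB x H); rewrite xB.
  by rewrite /gg (negbTE xnA) xB leq_subr.
case/orP: (side2 Hr Hj Hcd) => /andP[H1 H2].
- by apply: leqW; apply: leqW; apply: leq_add; [exact: bA|exact: bB].
- by rewrite addnC; apply: leqW; apply: leqW; apply: leq_add; [exact: bA|exact: bB].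
Qed.

Variable G : T -> T -> Prop.
Hypothesis HG : forall r j, r \in s -> j \in s -> cond r j -> G r j.

Lemma game N : forall r j d, r \in s -> j \in s -> d != r -> d != j ->
  (~~ cond r j -> gg r + gg j <= N.+1) -> fac_forces e N G r j d.
Proof.
elim: N => [|N IH] r j d Hr Hj Hdr Hdj Hb.
- case Hcd: (cond r j); first by left; apply: HG.
  have [rAB jAB rj] := side Hr Hj (negbT Hcd).
  have [pr _] := gg_next rAB; have [pj _] := gg_next jAB.
  by case: (arith1 pr pj (Hb (negbT Hcd))).
case Hcd: (cond r j); first by left; apply: HG.
have [rAB jAB rj] := side Hr Hj (negbT Hcd).
have [pr nr] := gg_next rAB; have [pj nj] := gg_next jAB.
have Hb' := Hb (negbT Hcd).
right.
pose r' := if next s r == d then r else next s r.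
pose j' := if next s j == d then j else next s j.
exists r', j'; split.
  rewrite /fac_move /r' /j'.
  case: ifP => Er; case: ifP => Ej; rewrite ?eqxx ?(next_cycle Hc) ?orbT ?(negbT Er) ?(negbT Ej) //=.
  all: try by rewrite ?andbT ?(eq_sym r) ?Hdr ?(eq_sym j) ?Hdj.
move=> d' /and3P[_ Hd1 Hd2].
apply: IH.
- by rewrite /r'; case: ifP; rewrite ?mem_next.
- by rewrite /j'; case: ifP; rewrite ?mem_next.
- exact: Hd1.
- exact: Hd2.
move=> _; rewrite /r' /j'.
case: ifP => Er; case: ifP => Ej.
- exfalso; move: rj; rewrite (can_inj (prev_next Hu) (etrans (eqP Er) (esym (eqP Ej)))).
  by rewrite eqxx.
- by rewrite addnC; apply: (arith2 nj (leqnn _)); rewrite addnC.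
- exact: (arith2 nr (leqnn _)).
- exact: (arith2 nr (ltnW nj)).
Qed.
End G.

Theorem claim1 (T : finType) (e : rel T)
  (HG : simple_graph e) (Hconn : connected_graph e)
  (C : seq T) (HC : is_cycle e C) (Hsc : has_shortcut e C)
  (r j d : T) (Hr : r \in C) (Hj : j \in C) (Hdr : d != r) (Hdj : d != j) :
  fac_forces e (size C)
    (fun r' j' => r' = j' \/
       exists C', [/\ is_cycle e C', size C' < size C, r' \in C' & j' \in C'])
    r j d.
Proof.
case: HG => Hsym Hirr.
case: HC => H3 Huq Hcy.
case: Hsc => u [v [Hu Hv Huv [p [Hp [Hs1 Hs2]]]]].
case: (rot_to_arc Huq Hu Hv Huv) => i A B HA HB Hrot.
have Us : uniq (u :: A ++ v :: B) by rewrite -Hrot rot_uniq.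
have Cs : cycle e (u :: A ++ v :: B) by rewrite -Hrot rot_cycle.
have Ms : C =i (u :: A ++ v :: B) by move=> z; rewrite -Hrot mem_rot.
have Sz : size C = size (u :: A ++ v :: B) by rewrite -Hrot size_rot.
rewrite -HA /= in Hs1; rewrite -HB /= in Hs2.
have [C2cyc C2sz C2mem] := short_cycle Us Cs Ms Hp Hs1 Hs2.
have E : rot (size (u :: A)) (u :: A ++ v :: B) = v :: B ++ u :: A by exact: rot_size_cat.
have Us' : uniq (v :: B ++ u :: A) by rewrite -E rot_uniq.
have Cs' : cycle e (v :: B ++ u :: A) by rewrite -E rot_cycle.
have Ms' : C =i (v :: B ++ u :: A) by move=> z; rewrite Ms -E mem_rot.
have Hp' := rev_avoid Hsym Hp.
have Sp : size (rev (belast u p)) = size p by rewrite size_rev size_belast.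
rewrite -Sp in Hs1 Hs2.
have [C1cyc C1sz C1mem] := short_cycle Us' Cs' Ms' Hp' Hs2 Hs1.
rewrite -E size_rot in C1sz.
apply: (@game T e u v A B Us Cs).
- move=> r0 j0 _ _ /orP[/orP[/eqP-> | /andP[H1 H2]] | /andP[H1 H2]].
  + by left.
  + right; exists (u :: A ++ belast v (rev (belast u p))); split => //.
    * by rewrite Sz.
    * exact: C1mem.
    * exact: C1mem.
  + right; exists (v :: B ++ belast u p); split => //.
    * by rewrite Sz.
    * exact: C2mem.
    * exact: C2mem.
- by rewrite -Ms.
- by rewrite -Ms.
- exact: Hdr.
- exact: Hdj.
- move=> Hc; apply: leq_trans (gg_bound Us _ _ Hc) _; rewrite -?Ms // Sz leqnSn //.
Qed.
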